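(* (i) If $1\le q<p<\infty$, then the pair $(\ell_p,\ell_q)$ has the sBPBp. (ii) If $1<p\le q<\infty$, then the pair $(\ell_p,\ell_q)$ fails the sBPBp.
   Context: Scalars $\mathbb{K}=\mathbb{R}$ or $\mathbb{C}$; $\ell_p$ is the usual sequence space. $S_X$ is the unit sphere of $X$, $\mathcal{L}(X,Y)$ the bounded linear operators. A pair $(X,Y)$ has the strong Bishop–Phelps–Bollobás property (sBPBp) if for every $\varepsilon>0$ and every $T\in\mathcal{L}(X,Y)$ with $\|T\|=1$ there exists $\eta=\eta(\varepsilon,T)>0$ such that whenever $x_0\in S_X$ satisfies $\|T(x_0)\|>1-\eta$, there exists $x_1\in S_X$ with $\|T(x_1)\|=1$ and $\|x_1-x_0\|<\varepsilon$. *)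

(* Defs.v *)
From Stdlib Require Import Reals Lra Classical ClassicalEpsilon.
Open Scope R_scope.

Record ScalarField := {
  scal : Type;
  sadd : scal -> scal -> scal;
  smul : scal -> scal -> scal;
  sopp : scal -> scal;
  sabs : scal -> R }.

Definition RScalars : ScalarField :=
  {| scal := R; sadd := Rplus; smul := Rmult; sopp := Ropp; sabs := Rabs |}.

Definition Cadd (z w : R * R) : R * R := (fst z + fst w, snd z + snd w).
Definition Cmul (z w : R * R) : R * R :=
  (fst z * fst w - snd z * snd w, fst z * snd w + snd z * fst w).
Definition Copp (z : R * R) : R * R := (- fst z, - snd z).
Definition Cmod (z : R * R) : R := sqrt (fst z * fst z + snd z * snd z).

Definition CScalars : ScalarField :=
  {| scal := R * R; sadd := Cadd; smul := Cmul; sopp := Copp; sabs := Cmod |}.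

Inductive scalar_choice := RealScalars | ComplexScalars.

Definition Kof (c : scalar_choice) : ScalarField :=
  match c with RealScalars => RScalars | ComplexScalars => CScalars end.

(* real power t^p for t >= 0, with 0^p = 0 (p > 0) *)
Definition rpow (t p : R) : R :=
  if Rlt_dec 0 t then Rpower t p else 0.

Section Seq.
Variable K : ScalarField.
Definition seqK := nat -> scal K.

Definition vadd (x y : seqK) : seqK := fun n => sadd K (x n) (y n).
Definition vscale (a : scal K) (x : seqK) : seqK := fun n => smul K a (x n).
Definition vsub (x y : seqK) : seqK := fun n => sadd K (x n) (sopp K (y n)).

Definition in_lp (p : R) (x : seqK) : Prop :=
  exists s, infinite_sum (fun n => rpow (sabs K (x n)) p) s.

Definition lp_sum (p : R) (x : seqK) : R :=
  match excluded_middle_informative (in_lp p x) with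
  | left H => proj1_sig (constructive_indefinite_description _ H)
  | right _ => 0
  end.

Definition lp_norm (p : R) (x : seqK) : R := rpow (lp_sum p x) (1 / p).

Definition bounded_linear (p q : R) (T : seqK -> seqK) : Prop :=
  (forall x, in_lp p x -> in_lp q (T x)) /\
  (forall x y, in_lp p x -> in_lp p y -> T (vadd x y) = vadd (T x) (T y)) /\
  (forall a x, in_lp p x -> T (vscale a x) = vscale a (T x)) /\
  (exists M, forall x, in_lp p x -> lp_norm q (T x) <= M * lp_norm p x).

Definition op_norm_is (p q : R) (T : seqK -> seqK) (r : R) : Prop :=
  is_lub (fun t => exists x, in_lp p x /\ lp_norm p x = 1 /\ t = lp_norm q (T x)) r.

Definition sBPBp (p q : R) : Prop :=
  forall eps, 0 < eps ->
  forall T, bounded_linear p q T -> op_norm_is p q T 1 ->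
  exists eta, 0 < eta /\
    forall x0, in_lp p x0 -> lp_norm p x0 = 1 -> lp_norm q (T x0) > 1 - eta ->
    exists x1, in_lp p x1 /\ lp_norm p x1 = 1 /\ lp_norm q (T x1) = 1 /\
               lp_norm p (vsub x1 x0) < eps.
End Seq.

(* Main.v *)
Require Import Defs.
From Stdlib Require Import Reals Lra Lia Classical ClassicalEpsilon FunctionalExtensionality.
Open Scope R_scope.


Lemma rpow_pos_eq t s : 0 < t -> rpow t s = Rpower t s.
Proof. intros H; unfold rpow; destruct (Rlt_dec 0 t); [reflexivity|lra]. Qed.

Lemma rpow_0 s : rpow 0 s = 0.
Proof. unfold rpow; destruct (Rlt_dec 0 0); [lra|reflexivity]. Qed.

Lemma rpow_nonpos t s : t <= 0 -> rpow t s = 0.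
Proof. intros H; unfold rpow; destruct (Rlt_dec 0 t); [lra|reflexivity]. Qed.

Lemma rpow_nn t s : 0 <= rpow t s.
Proof. unfold rpow; destruct (Rlt_dec 0 t); [unfold Rpower; left; apply exp_pos|lra]. Qed.

Lemma rpow_gt0 t s : 0 < t -> 0 < rpow t s.
Proof. intros H; rewrite rpow_pos_eq; auto; unfold Rpower; apply exp_pos. Qed.

Lemma rpow_le t u s : 0 < s -> 0 <= t <= u -> rpow t s <= rpow u s.
Proof.
  intros Hs [H0 H1]. destruct H0 as [H0|H0].
  - rewrite !rpow_pos_eq by lra. apply Rle_Rpower_l; lra.
  - subst. rewrite rpow_0. apply rpow_nn.
Qed.

Lemma rpow_lt t u s : 0 < s -> 0 <= t < u -> rpow t s < rpow u s.
Proof.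
  intros Hs [H0 H1]. destruct H0 as [H0|H0].
  - rewrite !rpow_pos_eq by lra. apply Rlt_Rpower_l; lra.
  - subst. rewrite rpow_0. apply rpow_gt0; lra.
Qed.

Lemma rpow_mul t u s : 0 <= t -> 0 <= u -> rpow (t*u) s = rpow t s * rpow u s.
Proof.
  intros Ht Hu. destruct Ht as [Ht|Ht]; [destruct Hu as [Hu|Hu]|].
  - rewrite !rpow_pos_eq; try lra. rewrite Rpower_mult_distr; auto. apply Rmult_lt_0_compat; auto.
  - subst. rewrite Rmult_0_r, !rpow_0; ring.
  - subst. rewrite Rmult_0_l, !rpow_0; ring.
Qed.

Lemma rpow_rpow t a b : 0 <= t -> rpow (rpow t a) b = rpow t (a*b).
Proof.
  intros [Ht|Ht].
  - rewrite (rpow_pos_eq t a) by auto. rewrite rpow_pos_eq.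
    + rewrite Rpower_mult, rpow_pos_eq; auto.
    + unfold Rpower; apply exp_pos.
  - subst. rewrite !rpow_0. reflexivity.
Qed.

Lemma rpow_1 t : 0 <= t -> rpow t 1 = t.
Proof. intros [H|H]. rewrite rpow_pos_eq; auto; apply Rpower_1; auto. subst; apply rpow_0. Qed.

Lemma rpow_plus t a b : 0 <= t -> rpow t (a+b) = rpow t a * rpow t b.
Proof.
  intros [H|H]. rewrite !rpow_pos_eq; auto; apply Rpower_plus.
  subst; rewrite !rpow_0; ring.
Qed.

Lemma rpow_one s : rpow 1 s = 1.
Proof. rewrite rpow_pos_eq by lra. unfold Rpower. rewrite ln_1, Rmult_0_r, exp_0; auto. Qed.

Lemma rpow_inv_pow t s : 0 <= t -> 0 < s -> rpow (rpow t s) (/s) = t.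
Proof. intros. rewrite rpow_rpow by auto. rewrite Rinv_r by lra. apply rpow_1; auto. Qed.

Lemma rpow_eq1 t s : 0 <= t -> 0 < s -> rpow t s = 1 -> t = 1.
Proof. intros H Hs E. rewrite <- (rpow_inv_pow t s) by auto. rewrite E. apply rpow_one. Qed.

Lemma rpow_le1 t s : 0 < s -> 0 <= t <= 1 -> rpow t s <= 1.
Proof. intros. rewrite <- (rpow_one s). apply rpow_le; lra. Qed.

Lemma rpow_lt1 t s : 0 < s -> 0 <= t < 1 -> rpow t s < 1.
Proof. intros. rewrite <- (rpow_one s). apply rpow_lt; lra. Qed.

Lemma rpow_ge1 t s : 0 < s -> 1 <= t -> 1 <= rpow t s.
Proof. intros. rewrite <- (rpow_one s). apply rpow_le; lra. Qed.

Lemma rpow_gt1 t s : 0 < s -> 1 < t -> 1 < rpow t s.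
Proof. intros. rewrite <- (rpow_one s). apply rpow_lt; lra. Qed.

Lemma rpow_le_rev t u s : 0 < s -> 0 <= t -> 0 <= u -> rpow t s <= rpow u s -> t <= u.
Proof.
  intros Hs Ht Hu H. destruct (Rle_lt_dec t u); auto.
  assert (rpow u s < rpow t s) by (apply rpow_lt; lra). lra.
Qed.

Lemma rpow_exp_le t a b : 1 <= t -> a <= b -> rpow t a <= rpow t b.
Proof. intros. rewrite !rpow_pos_eq by lra. apply Rle_Rpower; auto. Qed.

Lemma ineqE a b s th : 0 < s -> 0 <= a -> 0 <= b -> 0 < th ->
  rpow (a+b) s <= rpow (1+th) s * rpow b s + rpow (1 + /th) s * rpow a s.
Proof.
  intros Hs Ha Hb Ht.
  assert (0 <= rpow (1+th) s * rpow b s) by (apply Rmult_le_pos; apply rpow_nn).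
  assert (0 <= rpow (1+/th) s * rpow a s) by (apply Rmult_le_pos; apply rpow_nn).
  destruct (Rle_lt_dec a (th*b)).
  - rewrite <- rpow_mul by lra. apply Rle_trans with (rpow ((1+th)*b) s); [|lra].
    apply rpow_le; lra.
  - assert (b <= /th * a).
    { apply Rmult_le_reg_l with th; auto. rewrite <- Rmult_assoc, Rinv_r by lra. lra. }
    assert (0 < /th) by (apply Rinv_0_lt_compat; auto).
    rewrite <- (rpow_mul (1+/th)) by lra. apply Rle_trans with (rpow ((1+/th)*a) s); [|lra].
    apply rpow_le; try lra.
Qed.

Lemma choose_th s g : 0 < s -> 0 < g -> exists th, 0 < th /\ rpow (1+th) s = 1+g.
Proof.
  intros Hs Hg. exists (rpow (1+g) (/s) - 1). split.
  - assert (1 < rpow (1+g) (/s)) by (apply rpow_gt1; [apply Rinv_0_lt_compat|]; lra). lra.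
  - replace (1 + (rpow (1+g) (/s) - 1)) with (rpow (1+g) (/s)) by ring.
    rewrite rpow_rpow by lra. rewrite Rinv_l by lra. apply rpow_1; lra.
Qed.

Lemma rpow_small s e : 0 < s -> 0 < e -> exists d, 0 < d /\ forall t, 0 <= t < d -> rpow t s < e.
Proof.
  intros Hs He. exists (rpow e (/s)). split. apply rpow_gt0; auto.
  intros t Ht. apply Rlt_le_trans with (rpow (rpow e (/s)) s).
  apply rpow_lt; auto. rewrite rpow_rpow by lra. rewrite Rinv_l by lra. rewrite rpow_1; lra.
Qed.

Lemma rpow_cont s t e : 0 < s -> 0 <= t -> 0 < e ->
  exists d, 0 < d /\ forall u, 0 <= u -> Rabs (u - t) < d -> Rabs (rpow u s - rpow t s) < e.
Proof.
  intros Hs Ht He.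
  set (A := rpow t s).
  assert (HA : 0 <= A) by apply rpow_nn.
  set (g := Rmin 1 (e / (4 * (A + 2)))).
  assert (Hg : 0 < g). { unfold g; apply Rmin_pos; [lra|]. apply Rdiv_lt_0_compat; lra. }
  assert (Hg1 : g <= 1) by apply Rmin_l.
  assert (Hg2 : g * (A+2) <= e/4).
  { unfold g. apply Rle_trans with (e / (4*(A+2)) * (A+2)).
    apply Rmult_le_compat_r; [lra|apply Rmin_r]. right; field; lra. }
  destruct (choose_th s g Hs Hg) as [th [Hth Eth]].
  set (D := rpow (1 + /th) s).
  assert (HD : 0 <= D) by apply rpow_nn.
  destruct (rpow_small s (Rmin 1 (e / (4*(D+1)))) Hs) as [d [Hd Hdd]].
  { apply Rmin_pos; [lra|]. apply Rdiv_lt_0_compat; lra. }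
  exists d; split; auto. intros u Hu Hut.
  assert (Hsm : rpow (Rabs (u-t)) s < Rmin 1 (e / (4*(D+1)))) by (apply Hdd; split; [apply Rabs_pos|auto]).
  set (m := rpow (Rabs (u-t)) s) in *.
  assert (Hm0 : 0 <= m) by apply rpow_nn.
  assert (Hm1 : m <= 1) by (pose proof (Rmin_l 1 (e/(4*(D+1)))); lra).
  assert (Hm2 : D * m <= e/4).
  { apply Rle_trans with ((D+1) * (e / (4*(D+1)))).
    pose proof (Rmin_r 1 (e/(4*(D+1)))). apply Rle_trans with ((D+1)*m). nra.
    apply Rmult_le_compat_l; lra. right; field; lra. }
  assert (E1 : rpow u s <= (1+g) * A + D * m).
  { rewrite <- Eth. unfold A, D, m. apply Rle_trans with (rpow (Rabs (u - t) + t) s).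
    apply rpow_le; auto. split; auto. pose proof (Rle_abs (u-t)); lra.
    apply ineqE; auto. apply Rabs_pos. }
  assert (E2 : A <= (1+g) * rpow u s + D * m).
  { rewrite <- Eth. unfold A, D, m. apply Rle_trans with (rpow (Rabs (u - t) + u) s).
    apply rpow_le; auto. split; auto. rewrite Rabs_minus_sym. pose proof (Rle_abs (t-u)); lra.
    apply ineqE; auto. apply Rabs_pos. }
  assert (0 <= rpow u s) by apply rpow_nn.
  apply Rabs_def1.
  - nra.
  - nra.
Qed.
Lemma isum_cv a l : infinite_sum a l <-> Un_cv (sum_f_R0 a) l.
Proof. split; intro H; exact H. Qed.

Lemma isum_plus a b la lb : infinite_sum a la -> infinite_sum b lb ->
  infinite_sum (fun k => a k + b k) (la + lb).
Proof.
  intros Ha Hb. apply isum_cv. apply isum_cv in Ha, Hb.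
  intros e He. destruct (CV_plus _ _ _ _ Ha Hb e He) as [N HN]. exists N. intros n Hn.
  rewrite sum_plus. apply HN; auto.
Qed.

Lemma isum_scal a la c : infinite_sum a la -> infinite_sum (fun k => c * a k) (c * la).
Proof.
  intros Ha. apply isum_cv. apply isum_cv in Ha.
  assert (Hc : Un_cv (fun _ => c) c). { intros e He; exists O; intros; unfold Rdist; rewrite Rminus_diag, Rabs_R0; lra. }
  intros e He. destruct (CV_mult _ _ _ _ Hc Ha e He) as [N HN]. exists N. intros n Hn.
  replace (sum_f_R0 (fun k => c * a k) n) with (c * sum_f_R0 a n). apply HN; auto.
  rewrite scal_sum. apply sum_eq. intros; ring.
Qed.

Lemma isum_ext a b l : (forall k, a k = b k) -> infinite_sum a l -> infinite_sum b l.
Proof.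
  intros E H e He. destruct (H e He) as [N HN]. exists N; intros n Hn.
  rewrite <- (sum_eq a b n) by auto. auto.
Qed.

Lemma isum_nn_bounded a B : (forall k, 0 <= a k) -> (forall n, sum_f_R0 a n <= B) ->
  exists l, infinite_sum a l /\ l <= B.
Proof.
  intros H0 HB.
  assert (G : Un_growing (sum_f_R0 a)). { intro n. rewrite tech5. specialize (H0 (S n)); lra. }
  destruct (growing_cv _ G) as [l Hl]. { exists B. intros x [n ->]. auto. }
  exists l. split. exact Hl.
  apply Rle_cv_lim with (sum_f_R0 a) (fun _ => B); auto.
  intros e He; exists O; intros; unfold Rdist; rewrite Rminus_diag, Rabs_R0; lra.
Qed.

Lemma isum_partial_le a l n : (forall k, 0 <= a k) -> infinite_sum a l -> sum_f_R0 a n <= l.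
Proof.
  intros H0 H. apply growing_ineq; auto. intro m. rewrite tech5. specialize (H0 (S m)); lra.
Qed.

Lemma isum_term_le a l n : (forall k, 0 <= a k) -> infinite_sum a l -> a n <= l.
Proof.
  intros H0 H. apply Rle_trans with (sum_f_R0 a n); [|apply isum_partial_le; auto].
  destruct n. simpl; lra. rewrite tech5. pose proof (cond_pos_sum a n H0). lra.
Qed.

Lemma isum_nn a l : (forall k, 0 <= a k) -> infinite_sum a l -> 0 <= l.
Proof. intros. apply Rle_trans with (a O); [auto|apply isum_term_le; auto]. Qed.

Lemma isum_le a b la lb : (forall k, a k <= b k) -> infinite_sum a la -> infinite_sum b lb -> la <= lb.
Proof. intros H Ha Hb. apply Rle_cv_lim with (sum_f_R0 a) (sum_f_R0 b); auto. intro; apply sum_Rle; auto. Qed.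

Lemma isum_comp a b lb : (forall k, 0 <= a k <= b k) -> infinite_sum b lb ->
  exists la, infinite_sum a la /\ la <= lb.
Proof.
  intros H Hb. apply isum_nn_bounded. intro k; apply H.
  intro n. apply Rle_trans with (sum_f_R0 b n). apply sum_Rle; intros; apply H.
  apply isum_partial_le; auto. intro k; specialize (H k); lra.
Qed.

Lemma sum_fin a N n : (forall k, (N < k)%nat -> a k = 0) -> (N <= n)%nat -> sum_f_R0 a n = sum_f_R0 a N.
Proof.
  intros H Hn. induction Hn. reflexivity. rewrite tech5, H by lia. rewrite IHHn; ring.
Qed.

Lemma isum_fin a N : (forall k, (N < k)%nat -> a k = 0) -> infinite_sum a (sum_f_R0 a N).
Proof.
  intros H e He. exists N. intros n Hn. rewrite (sum_fin a N n); auto. unfold Rdist.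
  rewrite Rminus_diag, Rabs_R0; lra.
Qed.

Definition tl (N : nat) (a : nat -> R) (k : nat) : R := if Nat.leb k N then 0 else a k.

Lemma isum_tl a l N : infinite_sum a l -> infinite_sum (tl N a) (l - sum_f_R0 a N).
Proof.
  intros H.
  set (h := fun k => if Nat.leb k N then a k else 0).
  assert (Hh : infinite_sum h (sum_f_R0 a N)).
  { replace (sum_f_R0 a N) with (sum_f_R0 h N). apply isum_fin.
    intros k Hk. unfold h. destruct (Nat.leb_spec k N); [lia|auto].
    apply sum_eq. intros i Hi. unfold h. destruct (Nat.leb_spec i N); [auto|lia]. }
  pose proof (isum_plus _ _ _ _ H (isum_scal _ _ (-1) Hh)) as Hs.
  replace (l - sum_f_R0 a N) with (l + -1 * sum_f_R0 a N) by ring.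
  apply isum_ext with (2 := Hs). intro k. unfold tl, h. destruct (Nat.leb k N); ring.
Qed.

Lemma isum_single m v : infinite_sum (fun k => if Nat.eqb k m then v else 0) v.
Proof.
  assert (E : sum_f_R0 (fun k => if Nat.eqb k m then v else 0) m = v).
  { destruct m. simpl. reflexivity. rewrite tech5. rewrite Nat.eqb_refl.
    rewrite (sum_eq _ (fun _ => 0)). rewrite sum_cte. ring.
    intros i Hi. destruct (Nat.eqb_spec i (S m)); [lia|auto]. }
  pattern v at 2; rewrite <- E.
  apply isum_fin. intros k Hk. destruct (Nat.eqb_spec k m); [lia|auto].
Qed.

Lemma isum_pos a l m : (forall k, 0 <= a k) -> 0 < a m -> infinite_sum a l -> 0 < l.
Proof. intros. apply Rlt_le_trans with (a m); auto. apply isum_term_le; auto. Qed.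

Lemma nat_big A : exists n : nat, A < INR n.
Proof. destruct (INR_archimed 1 A) as [n Hn]; [lra|]. exists n; lra. Qed.

Lemma GROW a M : 0 < a -> exists j : nat, (1 <= j)%nat /\ M < rpow (INR j) a.
Proof.
  intros Ha. set (t := rpow (Rmax M 1 + 1) (/a)).
  destruct (nat_big (Rmax t 1)) as [j Hj]. exists j.
  assert (1 < INR j) by (pose proof (Rmax_r t 1); lra).
  split. { destruct j. simpl in H; lra. lia. }
  apply Rlt_le_trans with (rpow t a).
  - unfold t. rewrite rpow_rpow. rewrite Rinv_l by lra. rewrite rpow_1.
    pose proof (Rmax_l M 1); lra. pose proof (Rmax_r M 1); lra. pose proof (Rmax_r M 1); lra.
  - apply rpow_le; auto. split. apply rpow_nn. pose proof (Rmax_l t 1); lra.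
Qed.

Lemma FINCV N0 (f : nat -> nat -> R) (g : nat -> R) :
  (forall k, (k <= N0)%nat -> forall e, 0 < e -> exists N, forall n, (N <= n)%nat -> Rabs (f n k - g k) < e) ->
  forall e, 0 < e -> exists N, forall n, (N <= n)%nat -> Rabs (sum_f_R0 (f n) N0 - sum_f_R0 g N0) < e.
Proof.
  induction N0; intros H e He.
  - simpl. apply H; auto.
  - destruct (IHN0 (fun k Hk => H k (le_S _ _ Hk)) (e/2)) as [N1 H1]; [lra|].
    destruct (H (S N0) (le_n _) (e/2)) as [N2 H2]; [lra|].
    exists (max N1 N2). intros n Hn. rewrite !tech5.
    specialize (H1 n ltac:(lia)). specialize (H2 n ltac:(lia)).
    replace (sum_f_R0 (f n) N0 + f n (S N0) - (sum_f_R0 g N0 + g (S N0)))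
      with ((sum_f_R0 (f n) N0 - sum_f_R0 g N0) + (f n (S N0) - g (S N0))) by ring.
    eapply Rle_lt_trans; [apply Rabs_triang|]. lra.
Qed.

Lemma AA_real s C (U : nat -> R) (V W : nat -> nat -> R) (SU : R) (SV SW : nat -> R) :
  0 < s -> (forall k, 0 <= U k) -> (forall n k, 0 <= V n k) -> (forall n k, 0 <= W n k) ->
  (forall n k, W n k <= U k + V n k) -> (forall n k, V n k <= W n k + U k) ->
  (forall n k, Rabs (W n k - U k) <= V n k) ->
  infinite_sum (fun k => rpow (U k) s) SU ->
  (forall n, infinite_sum (fun k => rpow (V n k) s) (SV n)) -> (forall n, SV n <= C) ->
  (forall n, infinite_sum (fun k => rpow (W n k) s) (SW n)) ->
  (forall k e, 0 < e -> exists N, forall n, (N <= n)%nat -> V n k < e) ->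
  forall e, 0 < e -> exists N, forall n, (N <= n)%nat -> Rabs (SW n - SU - SV n) < e.
Proof.
  intros Hs HU HV HW H1 H2 H3 ISU ISV HC ISW Hcv e He.
  assert (HC0 : 0 <= C). { apply Rle_trans with (SV O); auto. apply isum_nn with (2 := ISV O). intro; apply rpow_nn. }
  set (g := Rmin 1 (e / (8 * (2*C+1)))).
  assert (Hg : 0 < g). { unfold g; apply Rmin_pos; [lra|]. apply Rdiv_lt_0_compat; lra. }
  assert (Hg1 : g <= 1) by apply Rmin_l.
  assert (Hg2 : g * (2*C+1) <= e/8).
  { unfold g. apply Rle_trans with (e / (8*(2*C+1)) * (2*C+1)).
    apply Rmult_le_compat_r; [lra|apply Rmin_r]. right; field; lra. }
  destruct (choose_th s g Hs Hg) as [th [Hth Eth]].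
  set (D := rpow (1 + /th) s).
  assert (HD : 0 <= D) by apply rpow_nn.
  set (tau := Rmin (e/8) (Rmin 1 (e/8) / (D+1))).
  assert (Htau : 0 < tau). { unfold tau. apply Rmin_pos. lra. apply Rdiv_lt_0_compat; [apply Rmin_pos|]; lra. }
  assert (Htau1 : tau <= e/8) by apply Rmin_l.
  assert (Htau2 : D * tau <= Rmin 1 (e/8)).
  { apply Rle_trans with ((D+1) * (Rmin 1 (e/8) / (D+1))).
    apply Rle_trans with ((D+1)*tau). nra. apply Rmult_le_compat_l. lra. apply Rmin_r.
    right; field; lra. }
  assert (Htau3 : D * tau <= 1) by (pose proof (Rmin_l 1 (e/8)); lra).
  assert (Htau4 : D * tau <= e/8) by (pose proof (Rmin_r 1 (e/8)); lra).
  destruct (ISU tau Htau) as [N0 HN0].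
  specialize (HN0 N0 (le_n _)). unfold Rdist in HN0.
  set (HU0 := sum_f_R0 (fun k => rpow (U k) s) N0) in *.
  assert (TUb : SU - HU0 < tau) by (rewrite Rabs_minus_sym in HN0; pose proof (Rle_abs (SU - HU0)); lra).
  assert (TU0 : 0 <= SU - HU0).
  { pose proof (isum_tl _ _ N0 ISU) as T. apply isum_nn with (2 := T). intro k; unfold tl; destruct (Nat.leb k N0); [lra|apply rpow_nn]. }
  destruct (FINCV N0 (fun n k => rpow (W n k) s) (fun k => rpow (U k) s)) with (e := e/8) as [N1 HN1]; [|lra|].
  { intros k _ e' He'. destruct (rpow_cont s (U k) e' Hs (HU k) He') as [d [Hd Hdd]].
    destruct (Hcv k d Hd) as [N HN]. exists N. intros n Hn. apply Hdd. auto.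
    specialize (HN n Hn). specialize (H3 n k). lra. }
  destruct (FINCV N0 (fun n k => rpow (V n k) s) (fun k => 0)) with (e := e/8) as [N2 HN2]; [|lra|].
  { intros k _ e' He'. destruct (rpow_small s e' Hs He') as [d [Hd Hdd]].
    destruct (Hcv k d Hd) as [N HN]. exists N. intros n Hn. rewrite Rminus_0_r, Rabs_right.
    apply Hdd. split; auto. apply Rle_ge, rpow_nn. }
  exists (max N1 N2). intros n Hn.
  specialize (HN1 n ltac:(lia)). specialize (HN2 n ltac:(lia)). simpl in HN1, HN2.
  rewrite sum_cte, Rmult_0_l, Rminus_0_r in HN2.
  set (HWn := sum_f_R0 (fun k => rpow (W n k) s) N0) in *.
  set (HVn := sum_f_R0 (fun k => rpow (V n k) s) N0) in *.
  assert (HV0 : 0 <= HVn) by (apply cond_pos_sum; intro; apply rpow_nn).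
  pose proof (isum_tl _ _ N0 (ISW n)) as TW.
  pose proof (isum_tl _ _ N0 (ISV n)) as TV.
  pose proof (isum_tl _ _ N0 ISU) as TU.
  fold HWn HVn HU0 in TW, TV, TU.
  assert (PW : forall k, rpow (W n k) s <= (1+g) * rpow (V n k) s + D * rpow (U k) s).
  { intro k. rewrite <- Eth. unfold D. apply Rle_trans with (rpow (U k + V n k) s).
    apply rpow_le; auto. apply ineqE; auto. }
  assert (PV : forall k, rpow (V n k) s <= (1+g) * rpow (W n k) s + D * rpow (U k) s).
  { intro k. rewrite <- Eth. unfold D. apply Rle_trans with (rpow (U k + W n k) s).
    apply rpow_le; auto. specialize (H2 n k); split; auto; lra. apply ineqE; auto. }
  assert (I1 : SW n - HWn <= (1+g) * (SV n - HVn) + D * (SU - HU0)).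
  { eapply isum_le; [|exact TW|apply isum_plus; apply isum_scal; eassumption].
    intro k. unfold tl. destruct (Nat.leb k N0). lra. apply PW. }
  assert (I2 : SV n - HVn <= (1+g) * (SW n - HWn) + D * (SU - HU0)).
  { eapply isum_le; [|exact TV|apply isum_plus; apply isum_scal; eassumption].
    intro k. unfold tl. destruct (Nat.leb k N0). lra. apply PV. }
  assert (TV0 : 0 <= SV n - HVn).
  { apply isum_nn with (2 := TV). intro k; unfold tl; destruct (Nat.leb k N0); [lra|apply rpow_nn]. }
  assert (TW0 : 0 <= SW n - HWn).
  { apply isum_nn with (2 := TW). intro k; unfold tl; destruct (Nat.leb k N0); [lra|apply rpow_nn]. }
  specialize (HC n).
  assert (DT : D * (SU - HU0) <= D * tau) by (apply Rmult_le_compat_l; lra).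
  assert (A1 : (SW n - HWn) - (SV n - HVn) <= e/8 + e/8).
  { assert (g * (SV n - HVn) <= g * (2*C+1)) by (apply Rmult_le_compat_l; lra). lra. }
  assert (A2 : (SV n - HVn) - (SW n - HWn) <= e/8 + e/8).
  { assert (SW n - HWn <= 2*C+1) by nra.
    assert (g * (SW n - HWn) <= g * (2*C+1)) by (apply Rmult_le_compat_l; lra). lra. }
  replace (SW n - SU - SV n) with ((HWn - HU0) - HVn + ((SW n - HWn) - (SV n - HVn)) - (SU - HU0)) by ring.
  apply Rabs_def1.
  - change (sum_f_R0 (fun k => rpow (U k) s) N0) with HU0 in HN1.
    pose proof (Rle_abs (HWn - HU0)). rewrite Rabs_right in HN2 by (apply Rle_ge; auto). lra.
  - change (sum_f_R0 (fun k => rpow (U k) s) N0) with HU0 in HN1.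
    pose proof (Rle_abs (-(HWn - HU0))) as Hx. rewrite Rabs_Ropp in Hx. rewrite Rabs_right in HN2 by (apply Rle_ge; auto). lra.
Qed.

Record Good (K : ScalarField) := {
  g_nn : forall a, 0 <= sabs K a;
  g_tri : forall a b, sabs K (sadd K a b) <= sabs K a + sabs K b;
  g_mul : forall a b, sabs K (smul K a b) = sabs K a * sabs K b;
  g_opp : forall a, sabs K (sopp K a) = sabs K a;
  g_cancel : forall a b, sadd K a (sadd K b (sopp K a)) = b;
  g_c2 : forall a b, sadd K (sadd K a b) (sopp K a) = b;
  g_c3 : forall a b, sadd K (sadd K a b) (sopp K b) = a;
  g_absub : forall a b, sabs K (sadd K a (sopp K b)) = sabs K (sadd K b (sopp K a));
  ofR : R -> scal K;
  g_ofR : forall r, sabs K (ofR r) = Rabs r;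
  Re : scal K -> R;
  g_Re_add : forall a b, Re (sadd K a b) = Re a + Re b;
  g_Re_abs : forall a, Rabs (Re a) <= sabs K a;
  g_rot : forall w, exists c, sabs K c = 1 /\ Re (smul K c w) = sabs K w;
  g_distr : forall c a b, smul K c (sadd K a b) = sadd K (smul K c a) (smul K c b);
  g_comm : forall c a b, smul K c (smul K a b) = smul K a (smul K c b);
  g_bw : forall (a : nat -> scal K) B, (forall n, sabs K (a n) <= B) ->
    exists (phi : nat -> nat) l, (forall n, (phi n < phi (S n))%nat) /\
      forall e, 0 < e -> exists N, forall n, (N <= n)%nat -> sabs K (sadd K (a (phi n)) (sopp K l)) < e
}.

Section LP.
Variable K : ScalarField.
Variable G : Good K.
Notation "| a |" := (sabs K a) (at level 30).

Definition pw (s : R) (x : seqK K) (k : nat) : R := rpow (sabs K (x k)) s.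

Lemma lp_sum_spec s x : in_lp K s x -> infinite_sum (pw s x) (lp_sum K s x).
Proof.
  intros H. unfold lp_sum. destruct (excluded_middle_informative (in_lp K s x)); [|contradiction].
  destruct (constructive_indefinite_description _ i) as [l Hl]. exact Hl.
Qed.

Lemma lp_sum_unique s x l : infinite_sum (pw s x) l -> lp_sum K s x = l.
Proof.
  intros H. assert (Hi : in_lp K s x) by (exists l; exact H).
  apply (uniqueness_sum (pw s x)); auto. apply lp_sum_spec; auto.
Qed.

Lemma lp_sum_nn s x : 0 <= lp_sum K s x.
Proof.
  unfold lp_sum. destruct (excluded_middle_informative (in_lp K s x)); [|lra].
  destruct (constructive_indefinite_description _ i) as [l Hl]. simpl.
  apply isum_nn with (2 := Hl). intro; apply rpow_nn.
Qed.

Lemma lp_coord s x k : in_lp K s x -> rpow (|x k|) s <= lp_sum K s x.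
Proof. intros H. apply (isum_term_le (pw s x)). intro; apply rpow_nn. apply lp_sum_spec; auto. Qed.

Lemma lp_comp s x y : 0 < s -> in_lp K s x -> (forall k, |y k| <= |x k|) ->
  in_lp K s y /\ lp_sum K s y <= lp_sum K s x.
Proof.
  intros Hs Hx H. destruct (isum_comp (pw s y) (pw s x) (lp_sum K s x)) as [l [Hl Hle]].
  - intro k. split. apply rpow_nn. apply rpow_le; auto. split; auto. apply (g_nn K G).
  - apply lp_sum_spec; auto.
  - split. exists l; auto. rewrite (lp_sum_unique s y l Hl). auto.
Qed.

Lemma lp_abs_eq s x y : 0 < s -> in_lp K s x -> (forall k, |y k| = |x k|) ->
  in_lp K s y /\ lp_sum K s y = lp_sum K s x.
Proof.
  intros Hs Hx H. split. apply (lp_comp s x y); auto. intro k; rewrite H; lra.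
  apply lp_sum_unique. apply isum_ext with (pw s x). intro k; unfold pw; rewrite H; auto.
  apply lp_sum_spec; auto.
Qed.

Lemma lp_two s x y z : 0 < s -> in_lp K s x -> in_lp K s y -> (forall k, |z k| <= |x k| + |y k|) ->
  in_lp K s z /\ lp_sum K s z <= rpow 2 s * lp_sum K s x + rpow 2 s * lp_sum K s y.
Proof.
  intros Hs Hx Hy H.
  destruct (isum_comp (pw s z) (fun k => rpow 2 s * pw s y k + rpow 2 s * pw s x k)
     (rpow 2 s * lp_sum K s y + rpow 2 s * lp_sum K s x)) as [l [Hl Hle]].
  - intro k. split. apply rpow_nn. unfold pw.
    apply Rle_trans with (rpow (|x k| + |y k|) s). apply rpow_le; auto. split; auto; apply (g_nn K G).
    pose proof (ineqE (|x k|) (|y k|) s 1 Hs (g_nn K G _) (g_nn K G _) Rlt_0_1) as E.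
    rewrite Rinv_1 in E. replace (1+1) with 2 in E by ring. exact E.
  - apply isum_plus; apply isum_scal; apply lp_sum_spec; auto.
  - split. exists l; auto. rewrite (lp_sum_unique s z l Hl). lra.
Qed.

Lemma lp_scale s c x : 0 < s -> in_lp K s x ->
  in_lp K s (vscale K c x) /\ lp_sum K s (vscale K c x) = rpow (|c|) s * lp_sum K s x.
Proof.
  intros Hs Hx.
  assert (E : infinite_sum (pw s (vscale K c x)) (rpow (|c|) s * lp_sum K s x)).
  { apply isum_ext with (fun k => rpow (|c|) s * pw s x k).
    intro k. unfold pw, vscale. rewrite (g_mul K G). rewrite rpow_mul; auto; apply (g_nn K G).
    apply isum_scal. apply lp_sum_spec; auto. }
  split. exists (rpow (|c|) s * lp_sum K s x); auto. apply lp_sum_unique; auto.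
Qed.

Lemma lp_norm_eq s x : lp_norm K s x = rpow (lp_sum K s x) (1/s).
Proof. reflexivity. Qed.

Lemma lp_norm_one s x : 0 < s -> (lp_norm K s x = 1 <-> lp_sum K s x = 1).
Proof.
  intros Hs. unfold lp_norm. split; intro H.
  - apply rpow_eq1 with (1/s); auto. apply lp_sum_nn. apply Rdiv_lt_0_compat; lra.
  - rewrite H. apply rpow_one.
Qed.

Lemma sabs_sub_le a b : |a| <= |b| + |sadd K a (sopp K b)|.
Proof.
  rewrite <- (g_cancel K G b a) at 1. apply (g_tri K G).
Qed.

Lemma sabs_sub_abs a b : Rabs (|a| - |b|) <= |sadd K a (sopp K b)|.
Proof.
  pose proof (sabs_sub_le a b). pose proof (sabs_sub_le b a). rewrite (g_absub K G b a) in H0.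
  apply Rabs_le; lra.
Qed.

Lemma AAK s C (u : seqK K) (v : nat -> seqK K) : 0 < s -> in_lp K s u ->
  (forall n, in_lp K s (v n)) -> (forall n, lp_sum K s (v n) <= C) ->
  (forall k e, 0 < e -> exists N, forall n, (N <= n)%nat -> |v n k| < e) ->
  forall e, 0 < e -> exists N, forall n, (N <= n)%nat ->
    Rabs (lp_sum K s (vadd K u (v n)) - lp_sum K s u - lp_sum K s (v n)) < e.
Proof.
  intros Hs Hu Hv HC Hcv.
  assert (Hw : forall n, in_lp K s (vadd K u (v n))).
  { intro n. apply (lp_two s u (v n)); auto. intro k; apply (g_tri K G). }
  apply (AA_real s C (fun k => |u k|) (fun n k => |v n k|) (fun n k => |vadd K u (v n) k|)); auto.
  - intro; apply (g_nn K G).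
  - intros; apply (g_nn K G).
  - intros; apply (g_nn K G).
  - intros n k; apply (g_tri K G).
  - intros n k. unfold vadd. rewrite <- (g_c2 K G (u k) (v n k)) at 1.
    eapply Rle_trans; [apply (g_tri K G)|]. rewrite (g_opp K G); lra.
  - intros n k. unfold vadd. apply Rabs_le. split.
    + rewrite <- (g_c3 K G (u k) (v n k)) at 2.
      pose proof (g_tri K G (sadd K (u k) (v n k)) (sopp K (v n k))). rewrite (g_opp K G) in H. lra.
    + pose proof (g_tri K G (u k) (v n k)). lra.
  - apply (lp_sum_spec s u); auto.
  - intro n; apply (lp_sum_spec s (v n)); auto.
  - intro n; apply (lp_sum_spec s (vadd K u (v n))); auto.
Qed.

Definition sinc (f : nat -> nat) := forall n, (f n < f (S n))%nat.

Lemma sinc_mono f : sinc f -> forall m n, (m < n)%nat -> (f m < f n)%nat.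
Proof. intros H m n Hmn. induction Hmn. apply H. specialize (H m0). lia. Qed.

Lemma sinc_ge f : sinc f -> forall n, (n <= f n)%nat.
Proof. intros H n. induction n. lia. specialize (H n). lia. Qed.

Definition cvK (a : nat -> scal K) (l : scal K) :=
  forall e, 0 < e -> exists N, forall n, (N <= n)%nat -> |sadd K (a n) (sopp K l)| < e.

Lemma bw_total B (g : nat -> scal K) : exists pr : (nat -> nat) * scal K,
  sinc (fst pr) /\ ((forall n, |g n| <= B) -> cvK (fun n => g (fst pr n)) (snd pr)).
Proof.
  destruct (classic (forall n, |g n| <= B)) as [Hb|Hb].
  - destruct (g_bw K G g B Hb) as [phi [l [H1 H2]]]. exists (phi, l). split; auto.
  - exists ((fun n => n), ofR K G 0). split. intro n; simpl; lia. intro; contradiction.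
Qed.

Definition bwf B g := proj1_sig (constructive_indefinite_description _ (bw_total B g)).
Lemma bwf_spec B g : sinc (fst (bwf B g)) /\ ((forall n, |g n| <= B) -> cvK (fun n => g (fst (bwf B g) n)) (snd (bwf B g))).
Proof. unfold bwf. destruct (constructive_indefinite_description _ (bw_total B g)); auto. Qed.

Fixpoint Psi (a : nat -> seqK K) B (k : nat) : nat -> nat :=
  match k with
  | O => fun n => n
  | S k' => fun n => Psi a B k' (fst (bwf B (fun m => a (Psi a B k' m) k')) n)
  end.

Lemma Psi_sinc a B k : sinc (Psi a B k).
Proof.
  induction k; intro n; simpl. lia.
  apply sinc_mono; auto. apply (proj1 (bwf_spec _ _)).
Qed.

Lemma Psi_comp a B d k : exists rho, sinc rho /\ forall m, Psi a B (d + k) m = Psi a B k (rho m).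
Proof.
  induction d.
  - exists (fun m => m). split. intro; lia. reflexivity.
  - destruct IHd as [rho [H1 H2]]. simpl.
    exists (fun m => rho (fst (bwf B (fun m0 => a (Psi a B (d + k)%nat m0) (d + k)%nat)) m)). split.
    + intro n. apply sinc_mono; auto. apply (proj1 (bwf_spec _ _)).
    + intro m. apply H2.
Qed.

Lemma DIAG (a : nat -> seqK K) B : (forall n k, |a n k| <= B) ->
  exists (phi : nat -> nat) (x : seqK K), sinc phi /\ forall k, cvK (fun n => a (phi n) k) (x k).
Proof.
  intros Hb.
  exists (fun n => Psi a B (S n) n).
  exists (fun k => snd (bwf B (fun m => a (Psi a B k m) k))). split.
  - intro n. change (Psi a B (S (S n)) (S n)) with
      (Psi a B (S n) (fst (bwf B (fun m => a (Psi a B (S n) m) (S n))) (S n))).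
    pose proof (sinc_ge _ (proj1 (bwf_spec B (fun m => a (Psi a B (S n) m) (S n)))) (S n)).
    destruct (Nat.eq_dec (fst (bwf B (fun m => a (Psi a B (S n) m) (S n))) (S n)) (S n)) as [E|E].
    + rewrite E. apply Psi_sinc.
    + apply sinc_mono. apply Psi_sinc. lia.
  - intros k e He.
    destruct (proj2 (bwf_spec B (fun m => a (Psi a B k m) k))) with (e := e) as [N HN]; auto.
    exists (max N k). intros n Hn.
    destruct (Psi_comp a B (n - k) (S k)) as [rho [Hr Er]].
    replace (n - k + S k)%nat with (S n) in Er by lia.
    rewrite Er. simpl. apply HN. pose proof (sinc_ge rho Hr n). lia.
Qed.

End LP.

Section Part1.
Variable K : ScalarField.
Variable G : Good K.
Notation "| a |" := (sabs K a) (at level 30).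
Variables p q : R.
Hypothesis Hq1 : 1 <= q.
Hypothesis Hqp : q < p.
Variable T : seqK K -> seqK K.
Hypothesis HT : bounded_linear K p q T.
Hypothesis HN : op_norm_is K p q T 1.

Let Hp0 : 0 < p. Proof. lra. Qed.
Let Hq0 : 0 < q. Proof. lra. Qed.

Lemma Tmap z : in_lp K p z -> in_lp K q (T z).
Proof. destruct HT as [H _]; auto. Qed.
Lemma Tadd x y : in_lp K p x -> in_lp K p y -> T (vadd K x y) = vadd K (T x) (T y).
Proof. destruct HT as [_ [H _]]; auto. Qed.
Lemma Tsc a x : in_lp K p x -> T (vscale K a x) = vscale K a (T x).
Proof. destruct HT as [_ [_ [H _]]]; auto. Qed.

Lemma ON z : in_lp K p z -> lp_norm K q (T z) <= lp_norm K p z.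
Proof.
  intros Hz. destruct HT as [_ [_ [_ [M HM]]]].
  pose proof (lp_sum_nn K p z) as P0.
  destruct P0 as [P0|P0].
  2:{ specialize (HM z Hz). assert (E0 : lp_norm K p z = 0) by (unfold lp_norm; rewrite <- P0; apply rpow_0).
        rewrite E0 in *. lra. }
  set (t := lp_norm K p z).
  assert (Ht : 0 < t) by (apply rpow_gt0; auto).
  assert (Etp : rpow t p = lp_sum K p z).
  { unfold t, lp_norm. rewrite rpow_rpow by lra. replace (1/p*p) with 1 by (field; lra). apply rpow_1; lra. }
  set (c := ofR K G (/t)).
  assert (Hc : |c| = /t). { unfold c. rewrite (g_ofR K G). apply Rabs_right. left; apply Rinv_0_lt_compat; auto. }
  assert (Hinv : forall s, rpow (/t) s * rpow t s = 1).
  { intro s. rewrite <- rpow_mul. rewrite Rinv_l by lra. apply rpow_one. left; apply Rinv_0_lt_compat; auto. lra. }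
  destruct (lp_scale K G p c z Hp0 Hz) as [Hw Ew].
  assert (Hw1 : lp_norm K p (vscale K c z) = 1).
  { apply lp_norm_one; auto. rewrite Ew, Hc, <- Etp. apply Hinv. }
  assert (Hb : lp_norm K q (T (vscale K c z)) <= 1).
  { destruct HN as [Hub _]. apply Hub. exists (vscale K c z). auto. }
  rewrite Tsc in Hb by auto.
  destruct (lp_scale K G q c (T z) Hq0 (Tmap z Hz)) as [_ E2].
  unfold lp_norm in Hb at 1. rewrite E2, Hc in Hb.
  rewrite rpow_mul in Hb by (try apply rpow_nn; apply lp_sum_nn).
  rewrite rpow_rpow in Hb by (left; apply Rinv_0_lt_compat; auto).
  replace (q * (1/q)) with 1 in Hb by (field; lra). rewrite rpow_1 in Hb by (left; apply Rinv_0_lt_compat; auto).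
  fold (lp_norm K q (T z)) in Hb.
  apply Rmult_le_reg_l with (/t). apply Rinv_0_lt_compat; auto.
  rewrite Rinv_l by lra. auto.
Qed.

Lemma ON2 z : in_lp K p z -> lp_sum K q (T z) <= rpow (lp_sum K p z) (q/p).
Proof.
  intros Hz. pose proof (ON z Hz) as H. unfold lp_norm in H.
  assert (H2 : rpow (rpow (lp_sum K q (T z)) (1/q)) q <= rpow (rpow (lp_sum K p z) (1/p)) q).
  { apply rpow_le; auto. split; [apply rpow_nn|auto]. }
  rewrite !rpow_rpow in H2 by apply lp_sum_nn.
  replace (1/q*q) with 1 in H2 by (field; lra). rewrite rpow_1 in H2 by apply lp_sum_nn.
  replace (1/p*q) with (q/p) in H2 by (field; lra). auto.
Qed.

Lemma CB z k : in_lp K p z -> |T z k| <= rpow (lp_sum K p z) (1/p).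
Proof.
  intros Hz. pose proof (ON z Hz) as H. unfold lp_norm in H.
  eapply Rle_trans; [|exact H].
  rewrite <- (rpow_inv_pow (|T z k|) q) by (apply (g_nn K G) || lra).
  replace (/q) with (1/q) by (field; lra).
  apply rpow_le. apply Rdiv_lt_0_compat; lra. split. apply rpow_nn.
  apply lp_coord; auto. apply Tmap; auto.
Qed.

Lemma zero_vec (y : seqK K) : in_lp K p y ->
  in_lp K p (vscale K (ofR K G 0) y) /\ lp_sum K p (vscale K (ofR K G 0) y) = 0.
Proof.
  intros Hy. destruct (lp_scale K G p (ofR K G 0) y Hp0 Hy) as [H1 H2]. split; auto.
  rewrite H2, (g_ofR K G), Rabs_R0, rpow_0. ring.
Qed.

Lemma FP (y : nat -> seqK K) C : (forall n, in_lp K p (y n)) -> (forall n, lp_sum K p (y n) <= C) ->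
  (forall k e, 0 < e -> exists N, forall n, (N <= n)%nat -> |y n k| < e) ->
  forall k0 e, 0 < e -> exists N, forall n, (N <= n)%nat -> |T (y n) k0| < e.
Proof.
  intros Hy HC Hcv k0 e He.
  destruct (classic (exists N, forall n, (N <= n)%nat -> |T (y n) k0| < e)) as [|Hc]; auto.
  exfalso.
  assert (Hc' : forall N, exists n, (N <= n)%nat /\ e <= |T (y n) k0|).
  { intro N. apply NNPP. intro H1. apply Hc. exists N. intros n Hn.
    apply Rnot_le_lt. intro H2. apply H1. exists n; auto. }
  clear Hc.
  assert (Hrot : forall n, {c | |c| = 1 /\ Re K G (smul K c (T (y n) k0)) = |T (y n) k0| }).
  { intro n. apply constructive_indefinite_description. apply (g_rot K G). }
  set (cf := fun n => proj1_sig (Hrot n)).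
  assert (Hcf : forall n, |cf n| = 1 /\ Re K G (smul K (cf n) (T (y n) k0)) = |T (y n) k0|).
  { intro n. unfold cf. destruct (Hrot n); auto. }
  set (v := fun n => vscale K (cf n) (y n)).
  assert (Hv : forall n, in_lp K p (v n) /\ lp_sum K p (v n) = lp_sum K p (y n)).
  { intro n. destruct (lp_scale K G p (cf n) (y n) Hp0 (Hy n)) as [H1 H2]. split; auto.
    unfold v. rewrite H2, (proj1 (Hcf n)), rpow_one. ring. }
  assert (HC0 : 0 <= C) by (apply Rle_trans with (lp_sum K p (y O)); [apply lp_sum_nn|auto]).
  assert (IND : forall j : nat, exists z, in_lp K p z /\ lp_sum K p z <= INR j * (C+1) /\
      INR j * e <= Re K G (T z k0)).
  { induction j.
    - destruct (zero_vec (y O) (Hy O)) as [H1 H2].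
      exists (vscale K (ofR K G 0) (y O)). split; auto. split. rewrite H2; simpl; lra.
      rewrite Tsc by auto. unfold vscale. simpl.
      pose proof (g_Re_abs K G (smul K (ofR K G 0) (T (y 0%nat) k0))) as Ha.
      rewrite (g_mul K G), (g_ofR K G), Rabs_R0, Rmult_0_l in Ha.
      pose proof (Rabs_pos (Re K G (smul K (ofR K G 0) (T (y 0%nat) k0)))).
      assert (Rabs (Re K G (smul K (ofR K G 0) (T (y 0%nat) k0))) = 0) by lra.
      destruct (Rcase_abs (Re K G (smul K (ofR K G 0) (T (y 0%nat) k0)))) as [Hneg|Hpos]; [rewrite Rabs_left in H0 by auto; lra|rewrite Rabs_right in H0 by auto; lra].
    - destruct IHj as [z [Hz [Pz Rz]]].
      destruct (AAK K G p C z v Hp0 Hz (fun n => proj1 (Hv n))) with (e := 1) as [N HN1]; try lra.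
      + intro n. rewrite (proj2 (Hv n)); auto.
      + intros k e' He'. destruct (Hcv k e' He') as [N HN2]. exists N. intros n Hn. specialize (HN2 n Hn).
        unfold v, vscale. rewrite (g_mul K G), (proj1 (Hcf n)), Rmult_1_l. auto.
      + destruct (Hc' N) as [n [Hn Hen]].
        exists (vadd K z (v n)). specialize (HN1 n Hn).
        assert (Hzv : in_lp K p (vadd K z (v n))).
        { apply (lp_two K G p z (v n)); auto. apply Hv. intro; apply (g_tri K G). }
        split; auto. split.
        * rewrite (proj2 (Hv n)) in HN1. specialize (HC n). rewrite S_INR.
          pose proof (Rle_abs (lp_sum K p (vadd K z (v n)) - lp_sum K p z - lp_sum K p (y n))). lra.
        * rewrite Tadd by (auto; apply Hv). unfold vadd. unfold v. rewrite Tsc by auto.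
          unfold vscale. rewrite (g_Re_add K G), (proj2 (Hcf n)). rewrite S_INR. lra. }
  set (M := rpow (C+1) (1/p) / e).
  destruct (GROW (1 - 1/p) M) as [j [Hj1 Hj2]].
  { assert (1/p < 1). { apply Rmult_lt_reg_l with p; auto. field_simplify; lra. } lra. }
  destruct (IND j) as [z [Hz [Pz Rz]]].
  assert (Hjpos : 0 < INR j) by (apply lt_0_INR; lia).
  assert (A1 : INR j * e <= rpow (INR j) (1/p) * rpow (C+1) (1/p)).
  { rewrite <- rpow_mul by lra.
    apply Rle_trans with (Re K G (T z k0)); auto.
    apply Rle_trans with (|T z k0|). pose proof (g_Re_abs K G (T z k0)). pose proof (Rle_abs (Re K G (T z k0))). lra.
    apply Rle_trans with (rpow (lp_sum K p z) (1/p)). apply CB; auto.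
    apply rpow_le. apply Rdiv_lt_0_compat; lra. split; auto. apply lp_sum_nn. }
  assert (Ej : INR j = rpow (INR j) (1/p) * rpow (INR j) (1 - 1/p)).
  { rewrite <- rpow_plus by lra. replace (1/p + (1 - 1/p)) with 1 by ring. rewrite rpow_1; lra. }
  assert (Hr : 0 < rpow (INR j) (1/p)) by (apply rpow_gt0; auto).
  assert (rpow (INR j) (1 - 1/p) * e <= rpow (C+1) (1/p)).
  { apply Rmult_le_reg_l with (rpow (INR j) (1/p)); auto. rewrite <- Rmult_assoc, <- Ej. exact A1. }
  unfold M in Hj2. apply (Rmult_lt_compat_r e) in Hj2; auto.
  unfold Rdiv in Hj2. rewrite Rmult_assoc, Rinv_l, Rmult_1_r in Hj2 by lra. lra.
Qed.

Definition GoodPt (eps : R) (x0 : seqK K) := exists x1, in_lp K p x1 /\ lp_norm K p x1 = 1 /\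
  lp_norm K q (T x1) = 1 /\ lp_norm K p (vsub K x1 x0) < eps.

Lemma part1 eps : 0 < eps -> exists eta, 0 < eta /\ forall x0, in_lp K p x0 -> lp_norm K p x0 = 1 ->
  lp_norm K q (T x0) > 1 - eta -> GoodPt eps x0.
Proof.
  intros Heps. apply NNPP. intro Hno.
  assert (Hseq : forall n : nat, exists x0, in_lp K p x0 /\ lp_sum K p x0 = 1 /\
     1 - / (INR n + 2) < lp_sum K q (T x0) /\ ~ GoodPt eps x0).
  { intro n. set (b := 1 - / (INR n + 2)).
    assert (Hb : 0 < b < 1).
    { unfold b. assert (1 < INR n + 2) by (pose proof (pos_INR n); lra).
      assert (/ (INR n + 2) < 1). { rewrite <- Rinv_1. apply Rinv_lt_contravar; lra. }
      assert (0 < / (INR n + 2)) by (apply Rinv_0_lt_compat; lra). lra. }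
    set (eta := 1 - rpow b (1/q)).
    assert (Heta : 0 < eta). { unfold eta. assert (rpow b (1/q) < 1) by (apply rpow_lt1; [apply Rdiv_lt_0_compat|]; lra). lra. }
    apply NNPP. intro H1. apply Hno. exists eta. split; auto.
    intros x0 Hx0 Hn0 Ht0. apply NNPP. intro H2. apply H1. exists x0.
    split; auto. split. apply lp_norm_one; auto. split; auto.
    assert (rpow (rpow b (1/q)) q < rpow (lp_norm K q (T x0)) q).
    { apply rpow_lt; auto. split. apply rpow_nn. unfold eta in Ht0. lra. }
    unfold lp_norm in H. rewrite !rpow_rpow in H by (lra || apply lp_sum_nn).
    replace (1/q*q) with 1 in H by (field; lra). rewrite !rpow_1 in H by (lra || apply lp_sum_nn).
    exact H. }
  assert (Hs : forall n : nat, {x0 | in_lp K p x0 /\ lp_sum K p x0 = 1 /\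
     1 - / (INR n + 2) < lp_sum K q (T x0) /\ ~ GoodPt eps x0}).
  { intro n. apply constructive_indefinite_description. apply Hseq. }
  clear Hseq.
  set (xs := fun n => proj1_sig (Hs n)).
  assert (Hxs : forall n, in_lp K p (xs n) /\ lp_sum K p (xs n) = 1 /\
     1 - / (INR n + 2) < lp_sum K q (T (xs n)) /\ ~ GoodPt eps (xs n)).
  { intro n. unfold xs. destruct (Hs n); auto. }
  clearbody xs. clear Hs.
  assert (Hbd : forall n k, |xs n k| <= 1).
  { intros n k. apply rpow_le_rev with p; auto. apply (g_nn K G). lra.
    rewrite rpow_one. destruct (Hxs n) as [H1 [H2 _]]. rewrite <- H2. apply lp_coord; auto. }
  destruct (DIAG K G xs 1 Hbd) as [phi [x [Hphi Hconv]]].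
  assert (HxB : forall N, sum_f_R0 (pw K p x) N <= 1).
  { intro N.
    destruct (Rle_lt_dec (sum_f_R0 (pw K p x) N) 1) as [|Hlt]; auto. exfalso.
    destruct (FINCV N (fun n => pw K p (xs (phi n))) (pw K p x)) with (e := sum_f_R0 (pw K p x) N - 1) as [N1 HN1]; [|lra|].
    { intros k _ e He. unfold pw.
      destruct (rpow_cont p (|x k|) e Hp0 (g_nn K G _) He) as [d [Hd Hdd]].
      destruct (Hconv k d Hd) as [N2 HN2]. exists N2. intros n Hn. apply Hdd. apply (g_nn K G).
      eapply Rle_lt_trans; [apply sabs_sub_abs; auto|]. apply HN2; auto. }
    specialize (HN1 N1 (le_n _)). simpl in HN1.
    assert (sum_f_R0 (pw K p (xs (phi N1))) N <= 1).
    { destruct (Hxs (phi N1)) as [H1 [H2 _]]. rewrite <- H2. apply isum_partial_le.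
      intro; apply rpow_nn. apply lp_sum_spec; auto. }
    pose proof (Rle_abs (sum_f_R0 (pw K p x) N - sum_f_R0 (pw K p (xs (phi N1))) N)).
    rewrite Rabs_minus_sym in H0. lra. }
  destruct (isum_nn_bounded (pw K p x) 1) as [lx [Hlx Hle]]; auto. intro; apply rpow_nn.
  assert (Hx : in_lp K p x) by (exists lx; auto).
  assert (HPx : lp_sum K p x <= 1) by (rewrite (lp_sum_unique K p x lx Hlx); auto).
  clear HxB Hle Hlx lx.
  set (y := fun n => vsub K (xs (phi n)) x).
  set (C := rpow 2 p * 1 + rpow 2 p * 1).
  assert (Hy : forall n, in_lp K p (y n) /\ lp_sum K p (y n) <= C).
  { intro n. destruct (lp_two K G p (xs (phi n)) x (y n)) as [H1 H2]; auto.
    apply Hxs. intro k. unfold y, vsub. rewrite <- (g_opp K G (x k)). apply (g_tri K G).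
    split; auto. destruct (Hxs (phi n)) as [_ [E1 _]]. rewrite E1 in H2.
    unfold C. pose proof (rpow_nn 2 p). nra. }
  assert (Hycv : forall k e, 0 < e -> exists N, forall n, (N <= n)%nat -> |y n k| < e).
  { intros k e He. destruct (Hconv k e He) as [N HN9]. exists N. intros n Hn. apply HN9; auto. }
  assert (Hrec : forall n, vadd K x (y n) = xs (phi n)).
  { intro n. apply functional_extensionality. intro k. unfold vadd, y, vsub. apply (g_cancel K G). }
  assert (AAp := AAK K G p C x y Hp0 Hx (fun n => proj1 (Hy n)) (fun n => proj2 (Hy n)) Hycv).
  assert (Pylim : forall e, 0 < e -> exists N, forall n, (N <= n)%nat -> Rabs (lp_sum K p (y n) - (1 - lp_sum K p x)) < e).
  { intros e He. destruct (AAp e He) as [N HN9]. exists N. intros n Hn. specialize (HN9 n Hn).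
    rewrite Hrec in HN9. destruct (Hxs (phi n)) as [_ [E1 _]]. rewrite E1 in HN9.
    rewrite Rabs_minus_sym. replace (1 - lp_sum K p x - lp_sum K p (y n)) with (1 - lp_sum K p x - lp_sum K p (y n)) by ring. exact HN9. }
  assert (Tycv := FP y C (fun n => proj1 (Hy n)) (fun n => proj2 (Hy n)) Hycv).
  set (C' := rpow C (q/p)).
  assert (Hty : forall n, in_lp K q (T (y n)) /\ lp_sum K q (T (y n)) <= C').
  { intro n. split. apply Tmap, Hy. eapply Rle_trans. apply ON2, Hy. apply rpow_le.
    apply Rdiv_lt_0_compat; lra. split. apply lp_sum_nn. apply Hy. }
  assert (AAq := AAK K G q C' (T x) (fun n => T (y n)) Hq0 (Tmap x Hx) (fun n => proj1 (Hty n)) (fun n => proj2 (Hty n)) Tycv).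
  assert (Trec : forall n, vadd K (T x) (T (y n)) = T (xs (phi n))).
  { intro n. rewrite <- Hrec. rewrite Tadd; auto. apply Hy. }
  assert (QTlim : forall e, 0 < e -> exists N, forall n, (N <= n)%nat -> Rabs (lp_sum K q (T (xs (phi n))) - 1) < e).
  { intros e He. destruct (nat_big (/e)) as [N HN9]. exists N. intros n Hn.
    destruct (Hxs (phi n)) as [H1 [H2 [H3 _]]].
    assert (H4 : lp_sum K q (T (xs (phi n))) <= 1).
    { eapply Rle_trans. apply ON2; auto. rewrite H2, rpow_one. lra. }
    assert (H5 : / (INR (phi n) + 2) < e).
    { assert (INR N <= INR (phi n)). { apply le_INR. pose proof (sinc_ge phi Hphi n). lia. }
      assert (0 < /e) by (apply Rinv_0_lt_compat; auto).
      rewrite <- (Rinv_inv e). apply Rinv_lt_contravar. apply Rmult_lt_0_compat; lra. lra. }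
    rewrite Rabs_minus_sym, Rabs_right; lra. }
  assert (Qylim : forall e, 0 < e -> exists N, forall n, (N <= n)%nat ->
     Rabs (lp_sum K q (T (y n)) - (1 - lp_sum K q (T x))) < e).
  { intros e He. destruct (AAq (e/2)) as [N1 HN1]; [lra|]. destruct (QTlim (e/2)) as [N2 HN2]; [lra|].
    exists (max N1 N2). intros n Hn. specialize (HN1 n ltac:(lia)). specialize (HN2 n ltac:(lia)).
    simpl in HN1. rewrite Trec in HN1.
    replace (lp_sum K q (T (y n)) - (1 - lp_sum K q (T x))) with
      ((lp_sum K q (T (xs (phi n))) - 1) - (lp_sum K q (T (xs (phi n))) - lp_sum K q (T x) - lp_sum K q (T (y n)))) by ring.
    eapply Rle_lt_trans. apply Rabs_triang. rewrite Rabs_Ropp. lra. }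
  assert (QTx1 : lp_sum K q (T x) = 1).
  { set (B := 1 - lp_sum K q (T x)).
    assert (HQx : lp_sum K q (T x) <= 1).
    { eapply Rle_trans. apply ON2; auto. apply rpow_le1. apply Rdiv_lt_0_compat; lra. split; [apply lp_sum_nn|auto]. }
    destruct (Req_dec (lp_sum K q (T x)) 1) as [E|Ne]; auto. exfalso.
    assert (HB : 0 < B) by (unfold B; lra).
    assert (IND : forall j : nat, exists z, in_lp K p z /\ lp_sum K p z <= 1 + 2 * INR j /\ INR j * (B/2) <= lp_sum K q (T z)).
    { induction j.
      - exists x. simpl. split; auto. split. lra. rewrite Rmult_0_l. apply lp_sum_nn.
      - destruct IHj as [z [Hz [Pz Qz]]].
        destruct (AAK K G p C z y Hp0 Hz (fun n => proj1 (Hy n)) (fun n => proj2 (Hy n)) Hycv (1/2)) as [N1 HN1]; [lra|].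
        destruct (Pylim (1/2)) as [N2 HN2]; [lra|].
        destruct (AAK K G q C' (T z) (fun n => T (y n)) Hq0 (Tmap z Hz) (fun n => proj1 (Hty n)) (fun n => proj2 (Hty n)) Tycv (B/4)) as [N3 HN3]; [lra|].
        destruct (Qylim (B/4)) as [N4 HN4]; [lra|].
        set (n := max (max N1 N2) (max N3 N4)).
        specialize (HN1 n ltac:(unfold n; lia)). specialize (HN2 n ltac:(unfold n; lia)).
        specialize (HN3 n ltac:(unfold n; lia)). specialize (HN4 n ltac:(unfold n; lia)).
        simpl in HN3.
        exists (vadd K z (y n)).
        assert (Hzy : in_lp K p (vadd K z (y n))) by (apply (lp_two K G p z (y n)); auto; [apply Hy|intro; apply (g_tri K G)]).
        split; auto. rewrite S_INR. split.
        + apply Rabs_def2 in HN1. apply Rabs_def2 in HN2. pose proof (lp_sum_nn K p x). lra.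
        + rewrite Tadd by (auto; apply Hy). apply Rabs_def2 in HN3. apply Rabs_def2 in HN4. fold B in HN4. lra. }
    set (r := q/p).
    assert (Hr : 0 < r < 1).
    { unfold r. split. apply Rdiv_lt_0_compat; lra. apply Rmult_lt_reg_r with p; auto. unfold Rdiv; rewrite Rmult_assoc, Rinv_l; lra. }
    destruct (GROW (1 - r) (6/B)) as [j [Hj1 Hj2]]; [lra|].
    destruct (IND j) as [z [Hz [Pz Qz]]].
    assert (Hjpos : 1 <= INR j) by (apply (le_INR 1); auto).
    assert (A1 : INR j * (B/2) <= 3 * rpow (INR j) r).
    { eapply Rle_trans; [exact Qz|]. eapply Rle_trans. apply ON2; auto. fold r.
      eapply Rle_trans. apply rpow_le. lra. split. apply lp_sum_nn. apply Rle_trans with (3 * INR j). lra. apply Rle_refl.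
      rewrite rpow_mul by lra. apply Rmult_le_compat_r. apply rpow_nn.
      pattern 3 at 2. rewrite <- (rpow_1 3) by lra. apply rpow_exp_le; lra. }
    assert (Ej : INR j = rpow (INR j) r * rpow (INR j) (1 - r)).
    { rewrite <- rpow_plus by lra. replace (r + (1 - r)) with 1 by ring. rewrite rpow_1; lra. }
    assert (Hrj : 0 < rpow (INR j) r) by (apply rpow_gt0; lra).
    assert (A2 : rpow (INR j) (1-r) * (B/2) <= 3).
    { apply Rmult_le_reg_l with (rpow (INR j) r); auto. rewrite <- Rmult_assoc, <- Ej. lra. }
    apply (Rmult_lt_compat_r (B/2)) in Hj2; [|lra].
    replace (6/B * (B/2)) with 3 in Hj2 by (field; lra). lra. }
  assert (HPx1 : lp_sum K p x = 1).
  { destruct (Rle_lt_dec 1 (lp_sum K p x)); [lra|]. exfalso.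
    assert (rpow (lp_sum K p x) (q/p) < 1) by (apply rpow_lt1; [apply Rdiv_lt_0_compat; lra| split; [apply lp_sum_nn|auto]]).
    pose proof (ON2 x Hx). lra. }
  destruct (Pylim (rpow eps p)) as [N HN0]. apply rpow_gt0; auto.
  specialize (HN0 N (le_n _)). rewrite HPx1, Rminus_diag, Rminus_0_r in HN0.
  destruct (Hxs (phi N)) as [_ [_ [_ Hng]]]. apply Hng.
  exists x. split; auto. split. apply lp_norm_one; auto. split. apply lp_norm_one; auto.
  destruct (lp_abs_eq K G p (y N) (vsub K x (xs (phi N))) Hp0 (proj1 (Hy N))) as [_ E].
  { intro k. unfold y, vsub. apply (g_absub K G). }
  unfold lp_norm. rewrite E.
  rewrite <- (rpow_inv_pow eps p) by lra. replace (/p) with (1/p) by (field; lra).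
  apply rpow_lt. apply Rdiv_lt_0_compat; lra. split. apply lp_sum_nn.
  rewrite Rabs_right in HN0 by (apply Rle_ge, lp_sum_nn). auto.
Qed.

End Part1.

Section Part2.
Variable K : ScalarField.
Variable G : Good K.
Notation "| a |" := (sabs K a) (at level 30).
Variables p q : R.
Hypothesis Hp1 : 1 < p.
Hypothesis Hpq : p <= q.

Let Hp0 : 0 < p. Proof. lra. Qed.
Let Hq0 : 0 < q. Proof. lra. Qed.

Lemma emb x : in_lp K p x -> in_lp K q x /\ lp_sum K q x <= rpow (lp_sum K p x) (q/p).
Proof.
  intros Hx. destruct (Req_dec p q) as [E|Ne].
  - subst q. replace (p/p) with 1 by (field; lra). rewrite rpow_1 by apply lp_sum_nn. split; auto; lra.
  - set (S := lp_sum K p x).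
    assert (HS : 0 <= S) by apply lp_sum_nn.
    destruct (isum_comp (pw K q x) (fun k => rpow S ((q-p)/p) * pw K p x k) (rpow S ((q-p)/p) * S)) as [l [Hl Hle]].
    + intro k. split. apply rpow_nn. unfold pw.
      replace q with (p + (q - p)) at 1 by ring. rewrite rpow_plus by apply (g_nn K G).
      rewrite (Rmult_comm (rpow S _)). apply Rmult_le_compat_l. apply rpow_nn.
      assert (Hk : |x k| <= rpow S (1/p)).
      { apply rpow_le_rev with p; auto. apply (g_nn K G). apply rpow_nn.
        rewrite rpow_rpow by auto. replace (1/p*p) with 1 by (field; lra). rewrite rpow_1 by auto.
        apply lp_coord; auto. }
      eapply Rle_trans. apply rpow_le with (u := rpow S (1/p)). lra. split; auto. apply (g_nn K G).
      rewrite rpow_rpow by auto. right; f_equal; field; lra.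
    + apply isum_scal. apply lp_sum_spec; auto.
    + split. exists l; auto. rewrite (lp_sum_unique K q x l Hl). eapply Rle_trans; [exact Hle|].
      right. pattern S at 2; rewrite <- (rpow_1 S) by auto. rewrite <- rpow_plus by auto. f_equal. field. lra.
Qed.

Lemma norm_qp x : in_lp K p x -> lp_norm K q x <= lp_norm K p x.
Proof.
  intros Hx. destruct (emb x Hx) as [_ H]. unfold lp_norm.
  eapply Rle_trans. apply rpow_le with (u := rpow (lp_sum K p x) (q/p)). apply Rdiv_lt_0_compat; lra.
  split; auto. apply lp_sum_nn. rewrite rpow_rpow by apply lp_sum_nn. right; f_equal; field; lra.
Qed.

Definition cc (k : nat) : R := 1 - / (INR k + 2).

Lemma cc_bounds k : 0 < cc k < 1.
Proof.
  unfold cc. assert (1 < INR k + 2) by (pose proof (pos_INR k); lra).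
  assert (/ (INR k + 2) < 1). { rewrite <- Rinv_1. apply Rinv_lt_contravar; lra. }
  assert (0 < / (INR k + 2)) by (apply Rinv_0_lt_compat; lra). lra.
Qed.

Definition Td (x : seqK K) : seqK K := fun k => smul K (ofR K G (cc k)) (x k).

Lemma Td_abs x k : |Td x k| = cc k * |x k|.
Proof. unfold Td. rewrite (g_mul K G), (g_ofR K G), Rabs_right; auto. pose proof (cc_bounds k); lra. Qed.

Lemma Td_p x : in_lp K p x -> in_lp K p (Td x) /\ lp_sum K p (Td x) <= lp_sum K p x.
Proof.
  intros Hx. apply lp_comp; auto. intro k. rewrite Td_abs. pose proof (cc_bounds k). pose proof (g_nn K G (x k)). nra.
Qed.

Lemma Td_norm x : in_lp K p x -> lp_norm K q (Td x) <= lp_norm K p x.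
Proof.
  intros Hx. destruct (Td_p x Hx) as [H1 H2]. eapply Rle_trans. apply norm_qp; auto.
  unfold lp_norm. apply rpow_le. apply Rdiv_lt_0_compat; lra. split; auto. apply lp_sum_nn.
Qed.

Lemma Td_bl : bounded_linear K p q Td.
Proof.
  split; [|split; [|split]].
  - intros x Hx. apply emb. apply Td_p; auto.
  - intros x y _ _. apply functional_extensionality; intro k. unfold Td, vadd. apply (g_distr K G).
  - intros a x _. apply functional_extensionality; intro k. unfold Td, vscale. apply (g_comm K G).
  - exists 1. intros x Hx. rewrite Rmult_1_l. apply Td_norm; auto.
Qed.

Definition ev (m : nat) : seqK K := fun j => if Nat.eqb j m then ofR K G 1 else ofR K G 0.

Lemma ev_sum s m a : 0 < s -> 0 <= a -> (forall j, |ev m j| * a = |ev m j| * a) ->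
  infinite_sum (fun j => rpow (a * |ev m j|) s) (rpow a s).
Proof.
  intros Hs Ha _. apply isum_ext with (fun k => if Nat.eqb k m then rpow a s else 0); [|apply isum_single].
  intro k. unfold ev. destruct (Nat.eqb k m); rewrite (g_ofR K G).
  - rewrite Rabs_R1, Rmult_1_r. auto.
  - rewrite Rabs_R0, Rmult_0_r, rpow_0. auto.
Qed.

Lemma ev_p m : in_lp K p (ev m) /\ lp_sum K p (ev m) = 1.
Proof.
  assert (H : infinite_sum (pw K p (ev m)) 1).
  { rewrite <- (rpow_one p). apply isum_ext with (fun j => rpow (1 * |ev m j|) p).
    intro; unfold pw; rewrite Rmult_1_l; auto. apply ev_sum; auto; lra. }
  split. exists 1; auto. apply lp_sum_unique; auto.
Qed.

Lemma ev_Td m : lp_norm K q (Td (ev m)) = cc m.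
Proof.
  assert (H : infinite_sum (pw K q (Td (ev m))) (rpow (cc m) q)).
  { apply isum_ext with (fun j => rpow (cc j * |ev m j|) q).
    intro; unfold pw; rewrite Td_abs; auto.
    apply isum_ext with (fun j => rpow (cc m * |ev m j|) q).
    intro j. unfold ev. destruct (Nat.eqb_spec j m). subst; auto.
    rewrite (g_ofR K G), Rabs_R0, !Rmult_0_r. auto.
    apply ev_sum; auto. pose proof (cc_bounds m); lra. }
  unfold lp_norm. rewrite (lp_sum_unique K q _ _ H). rewrite rpow_rpow.
  replace (q * (1/q)) with 1 by (field; lra). apply rpow_1. pose proof (cc_bounds m); lra.
  pose proof (cc_bounds m); lra.
Qed.

Lemma cc_close e : 0 < e -> exists m, 1 - e < cc m.
Proof.
  intros He. destruct (nat_big (/e)) as [m Hm]. exists m. unfold cc.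
  assert (0 < /e) by (apply Rinv_0_lt_compat; auto).
  assert (/ (INR m + 2) < e).
  { rewrite <- (Rinv_inv e). apply Rinv_lt_contravar. apply Rmult_lt_0_compat; lra. lra. }
  lra.
Qed.

Lemma Td_on : op_norm_is K p q Td 1.
Proof.
  split.
  - intros t [x [Hx [Hn ->]]]. rewrite <- Hn. apply Td_norm; auto.
  - intros b Hb. destruct (Rle_lt_dec 1 b); auto. exfalso.
    destruct (cc_close (1 - b)) as [m Hm]; [lra|].
    assert (cc m <= b).
    { apply Hb. exists (ev m). destruct (ev_p m) as [H1 H2]. split; auto. split.
      apply lp_norm_one; auto. rewrite ev_Td; auto. }
    lra.
Qed.

Lemma Td_strict x : in_lp K p x -> lp_sum K p x = 1 -> lp_norm K q (Td x) < 1.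
Proof.
  intros Hx H1.
  assert (Hex : exists k, 0 < |x k|).
  { apply NNPP. intro Hn.
    assert (E : infinite_sum (pw K p x) 0).
    { apply isum_ext with (fun _ => 0). intro k. unfold pw.
      assert (|x k| = 0). { pose proof (g_nn K G (x k)). destruct H; auto. exfalso; apply Hn; exists k; auto. }
      rewrite H, rpow_0; auto.
      intros e He. exists O. intros n _. rewrite sum_cte. unfold Rdist. rewrite Rmult_0_l, Rminus_0_r, Rabs_R0. lra. }
    rewrite (lp_sum_unique K p x 0 E) in H1. lra. }
  destruct Hex as [k Hk].
  destruct (Td_p x Hx) as [HT1 HT2].
  assert (Hlt : lp_sum K p (Td x) < 1).
  { assert (D : infinite_sum (fun j => pw K p x j + -1 * pw K p (Td x) j) (lp_sum K p x + -1 * lp_sum K p (Td x))).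
    { apply isum_plus. apply lp_sum_spec; auto. apply isum_scal. apply lp_sum_spec; auto. }
    assert (0 < lp_sum K p x + -1 * lp_sum K p (Td x)).
    { apply isum_pos with (3 := D) (m := k).
      - intro j. unfold pw. rewrite Td_abs. assert (rpow (cc j * |x j|) p <= rpow (|x j|) p).
        { apply rpow_le; auto. pose proof (cc_bounds j). pose proof (g_nn K G (x j)). split. nra. nra. }
        lra.
      - unfold pw. rewrite Td_abs. assert (rpow (cc k * |x k|) p < rpow (|x k|) p).
        { apply rpow_lt; auto. pose proof (cc_bounds k). split. nra. nra. }
        lra. }
    lra. }
  eapply Rle_lt_trans. apply norm_qp; auto. unfold lp_norm. apply rpow_lt1.
  apply Rdiv_lt_0_compat; lra. split; auto. apply lp_sum_nn.
Qed.

Lemma part2 : ~ sBPBp K p q.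
Proof.
  intro H. destruct (H 1 Rlt_0_1 Td Td_bl Td_on) as [eta [Heta H2]].
  destruct (cc_close eta Heta) as [m Hm].
  destruct (ev_p m) as [E1 E2].
  destruct (H2 (ev m) E1) as [x1 [Hx1 [Hn1 [HT1 _]]]].
  apply lp_norm_one; auto. rewrite ev_Td. lra.
  apply lp_norm_one in Hn1; auto.
  pose proof (Td_strict x1 Hx1 Hn1). lra.
Qed.

End Part2.

Lemma cluster_sub (u : nat -> R) l :
  (forall e, 0 < e -> forall N, exists n, (N <= n)%nat /\ Rabs (u n - l) < e) ->
  exists phi, sinc phi /\ forall e, 0 < e -> exists N, forall n, (N <= n)%nat -> Rabs (u (phi n) - l) < e.
Proof.
  intros H.
  assert (Hg : forall N k : nat, {n | (N <= n)%nat /\ Rabs (u n - l) < / (INR k + 1)}).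
  { intros N k. apply constructive_indefinite_description. apply H.
    apply Rinv_0_lt_compat. pose proof (pos_INR k); lra. }
  set (g := fun N k => proj1_sig (Hg N k)).
  assert (Hgs : forall N k, (N <= g N k)%nat /\ Rabs (u (g N k) - l) < / (INR k + 1)).
  { intros. unfold g. destruct (Hg N k); auto. }
  clearbody g.
  set (phi := fix phi n := match n with O => g O O | S m => g (S (phi m)) (S m) end).
  exists phi. split.
  - intro n. simpl. destruct (Hgs (S (phi n)) (S n)). lia.
  - intros e He. destruct (nat_big (/e)) as [N HN]. exists N. intros n Hn.
    assert (Hb : Rabs (u (phi n) - l) < / (INR n + 1)).
    { destruct n; simpl; apply Hgs. }
    eapply Rlt_trans. exact Hb.
    assert (0 < /e) by (apply Rinv_0_lt_compat; auto).
    rewrite <- (Rinv_inv e). apply Rinv_lt_contravar. apply Rmult_lt_0_compat; [lra|pose proof (pos_INR n); lra].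
    apply le_INR in Hn. lra.
Qed.

Lemma bw_R (a : nat -> R) B : (forall n, Rabs (a n) <= B) ->
  exists phi l, sinc phi /\ forall e, 0 < e -> exists N, forall n, (N <= n)%nat -> Rabs (a (phi n) - l) < e.
Proof.
  intros Hb. destruct (Bolzano_Weierstrass a (fun c => -B <= c <= B) (compact_P3 (-B) B)) as [l Hl].
  { intro n. specialize (Hb n). split; apply Rabs_le_iff in Hb || idtac; pose proof (Rle_abs (a n)); pose proof (Rle_abs (-(a n))); rewrite Rabs_Ropp in *; lra. }
  destruct (cluster_sub a l) as [phi Hphi].
  { intros e He N. destruct (Hl (disc l (mkposreal e He)) N) as [n [Hn Hd]].
    exists (mkposreal e He). intros y Hy; exact Hy. exists n. split; auto. }
  exists phi, l. auto.
Qed.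

Lemma sinc_comp f g : sinc f -> sinc g -> sinc (fun n => f (g n)).
Proof. intros Hf Hg n. apply sinc_mono; auto. Qed.

Lemma cv_sub (a : nat -> R) l psi : sinc psi ->
  (forall e, 0 < e -> exists N, forall n, (N <= n)%nat -> Rabs (a n - l) < e) ->
  forall e, 0 < e -> exists N, forall n, (N <= n)%nat -> Rabs (a (psi n) - l) < e.
Proof.
  intros Hs H e He. destruct (H e He) as [N HN]. exists N. intros n Hn. apply HN.
  pose proof (sinc_ge psi Hs n). lia.
Qed.

Lemma goodR : Good RScalars.
Proof.
  refine {| ofR := ((fun r => r) : R -> scal RScalars); Re := ((fun r => r) : scal RScalars -> R) |}; simpl.
  - intro; apply Rabs_pos.
  - intros; apply Rabs_triang.
  - intros; apply Rabs_mult.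
  - intros; apply Rabs_Ropp.
  - intros; ring.
  - intros; ring.
  - intros; ring.
  - intros a b. replace (a + - b) with (a - b) by ring. replace (b + - a) with (b - a) by ring. apply Rabs_minus_sym.
  - reflexivity.
  - reflexivity.
  - intros; apply Rle_refl.
  - intro w. destruct (Rle_dec 0 w).
    + exists 1. rewrite Rabs_R1, Rabs_right by lra. split; ring.
    + exists (-1). rewrite Rabs_left by lra. rewrite (Rabs_left w) by lra. split; ring.
  - intros; ring.
  - intros; ring.
  - intros a B Hb. destruct (bw_R a B Hb) as [phi [l [H1 H2]]]. exists phi, l. split; [exact H1|].
    intros e He. destruct (H2 e He) as [N HN]. exists N. intros n Hn. apply HN; auto.
Qed.

Lemma Cmod_eq z : Cmod z = sqrt (fst z * fst z + snd z * snd z).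
Proof. reflexivity. Qed.

Lemma Cmod_nn z : 0 <= Cmod z.
Proof. apply sqrt_pos. Qed.

Lemma Cmod_sq z : Cmod z * Cmod z = fst z * fst z + snd z * snd z.
Proof. apply sqrt_sqrt. nra. Qed.

Lemma sq_le_rev x y : 0 <= x -> 0 <= y -> x * x <= y * y -> x <= y.
Proof. intros. nra. Qed.

Lemma Cmod_tri a b : Cmod (Cadd a b) <= Cmod a + Cmod b.
Proof.
  apply sq_le_rev. apply Cmod_nn. pose proof (Cmod_nn a); pose proof (Cmod_nn b); lra.
  rewrite Cmod_sq. destruct a as [a1 a2], b as [b1 b2]. unfold Cadd; simpl.
  pose proof (Cmod_sq (a1,a2)) as Ha. pose proof (Cmod_sq (b1,b2)) as Hb. simpl in Ha, Hb.
  pose proof (Cmod_nn (a1,a2)). pose proof (Cmod_nn (b1,b2)).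
  set (A := Cmod (a1,a2)) in *. set (B := Cmod (b1,b2)) in *.
  assert (a1*b1 + a2*b2 <= A*B).
  { destruct (Rle_dec (a1*b1+a2*b2) 0). nra.
    apply sq_le_rev; try nra. 
    replace (A*B*(A*B)) with ((A*A)*(B*B)) by ring. rewrite Ha, Hb. pose proof (Rle_0_sqr (a1*b2 - a2*b1)). unfold Rsqr in *. nra. }
  nra.
Qed.

Lemma Cmod_mul a b : Cmod (Cmul a b) = Cmod a * Cmod b.
Proof.
  destruct a as [a1 a2], b as [b1 b2]. unfold Cmod, Cmul; simpl.
  rewrite <- sqrt_mult by nra. f_equal. ring.
Qed.

Lemma Cmod_opp a : Cmod (Copp a) = Cmod a.
Proof. destruct a. unfold Cmod, Copp; simpl. f_equal. ring. Qed.

Lemma Cmod_ofR r : Cmod (r, 0) = Rabs r.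
Proof. unfold Cmod; simpl. rewrite <- sqrt_Rsqr_abs. f_equal. unfold Rsqr; ring. Qed.

Lemma Cmod_fst z : Rabs (fst z) <= Cmod z.
Proof.
  destruct z as [a b]. unfold Cmod; simpl. rewrite <- sqrt_Rsqr_abs. apply sqrt_le_1_alt. unfold Rsqr; nra.
Qed.

Lemma Cmod_snd z : Rabs (snd z) <= Cmod z.
Proof.
  destruct z as [a b]. unfold Cmod; simpl. rewrite <- sqrt_Rsqr_abs. apply sqrt_le_1_alt. unfold Rsqr; nra.
Qed.

Lemma Cmod_le_sum z : Cmod z <= Rabs (fst z) + Rabs (snd z).
Proof.
  apply sq_le_rev. apply Cmod_nn. pose proof (Rabs_pos (fst z)); pose proof (Rabs_pos (snd z)); lra.
  rewrite Cmod_sq. pose proof (Rabs_pos (fst z)); pose proof (Rabs_pos (snd z)).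
  assert (E1 : Rabs (fst z) * Rabs (fst z) = fst z * fst z) by (rewrite <- Rabs_mult; apply Rabs_right; nra).
  assert (E2 : Rabs (snd z) * Rabs (snd z) = snd z * snd z) by (rewrite <- Rabs_mult; apply Rabs_right; nra).
  nra.
Qed.

Lemma goodC : Good CScalars.
Proof.
  refine {| ofR := ((fun r => (r, 0)) : R -> scal CScalars); Re := ((fun z => fst z) : scal CScalars -> R) |}; simpl.
  - apply Cmod_nn.
  - apply Cmod_tri.
  - apply Cmod_mul.
  - apply Cmod_opp.
  - intros [a1 a2] [b1 b2]; unfold Cadd, Copp; simpl; f_equal; ring.
  - intros [a1 a2] [b1 b2]; unfold Cadd, Copp; simpl; f_equal; ring.
  - intros [a1 a2] [b1 b2]; unfold Cadd, Copp; simpl; f_equal; ring.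
  - intros [a1 a2] [b1 b2]; unfold Cmod, Cadd, Copp; simpl; f_equal; ring.
  - apply Cmod_ofR.
  - intros [a1 a2] [b1 b2]; reflexivity.
  - apply Cmod_fst.
  - intros [a b]. destruct (Req_dec (Cmod (a,b)) 0) as [E|E].
    + exists (1, 0). rewrite Cmod_ofR, Rabs_R1. split; auto. rewrite E. unfold Cmul; simpl.
      pose proof (Cmod_sq (a,b)) as Hs. rewrite E in Hs. simpl in Hs. assert (a = 0) by nra. subst. ring.
    + set (m := Cmod (a,b)) in *. pose proof (Cmod_nn (a,b)) as Hm. fold m in Hm.
      pose proof (Cmod_sq (a,b)) as Hs. fold m in Hs. simpl in Hs.
      exists (a/m, - b/m). split.
      * assert (Hm0 : 0 < m) by lra.
        assert (E1 : a / m * (a / m) + - b / m * (- b / m) = 1).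
        { unfold Rdiv. replace (a * / m * (a * / m) + - b * / m * (- b * / m)) with ((a*a+b*b) * / (m*m)).
          rewrite <- Hs. field. lra. field. lra. }
        unfold Cmod; simpl. rewrite E1. apply sqrt_1.
      * unfold Cmul; simpl. assert (Hm0 : 0 < m) by lra.
        replace (a / m * a - - b / m * b) with ((a*a+b*b)/m) by (field; lra).
        rewrite <- Hs. field. lra.
  - intros [c1 c2] [a1 a2] [b1 b2]; unfold Cmul, Cadd; simpl; f_equal; ring.
  - intros [c1 c2] [a1 a2] [b1 b2]; unfold Cmul; simpl; f_equal; ring.
  - intros a B Hb.
    destruct (bw_R (fun n => fst (a n)) B) as [phi1 [l1 [H1 H2]]].
    { intro n. eapply Rle_trans. apply Cmod_fst. apply Hb. }
    destruct (bw_R (fun n => snd (a (phi1 n))) B) as [phi2 [l2 [H3 H4]]].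
    { intro n. eapply Rle_trans. apply Cmod_snd. apply Hb. }
    exists (fun n => phi1 (phi2 n)), (l1, l2). split. apply sinc_comp; auto.
    intros e He. destruct (cv_sub _ _ phi2 H3 H2 (e/2)) as [N1 HN1]; [lra|].
    destruct (H4 (e/2)) as [N2 HN2]; [lra|].
    exists (max N1 N2). intros n Hn.
    eapply Rle_lt_trans. apply Cmod_le_sum. unfold Cadd, Copp; simpl.
    specialize (HN1 n ltac:(lia)). specialize (HN2 n ltac:(lia)). simpl in HN1, HN2.
    replace (fst (a (phi1 (phi2 n))) + - l1) with (fst (a (phi1 (phi2 n))) - l1) by ring.
    replace (snd (a (phi1 (phi2 n))) + - l2) with (snd (a (phi1 (phi2 n))) - l2) by ring.
    lra.
Qed.

Theorem mainTheorem20 (c : scalar_choice) :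
  (forall p q : R, 1 <= q -> q < p -> sBPBp (Kof c) p q) /\
  (forall p q : R, 1 < p -> p <= q -> ~ sBPBp (Kof c) p q).
Proof.
  assert (G : Good (Kof c)) by (destruct c; [exact goodR|exact goodC]).
  split.
  - intros p q H1 H2 eps Heps T HT HN.
    destruct (part1 _ G p q H1 H2 T HT HN eps Heps) as [eta [He H]].
    exists eta. split; auto.
  - intros p q H1 H2. apply (part2 _ G p q H1 H2).
Qed.
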